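(* Let $\Psi$ be proper closed convex, $F=\frac1n\sum_{i=1}^nF_i$ with $F_i(x)=\mathbb{E}_{\xi_i\sim\mathcal{D}_i}[F_{\xi_i}(x)]$, and $x^*$ a solution of $\langle F(x^* ),x-x^*\rangle+\Psi(x)-\Psi(x^* )\ge0$ for all $x$. Let $K\ge0$, $\beta\in(0,1]$, $0<\gamma\le\frac{1}{\sqrt{12}L}$, $V\ge\|x^0-x^*\|^2+\frac{409600\gamma^2\ln^2\frac{48n(K+1)}{\beta}}{n^2}\sum_{i=1}^n\|F_i(x^* )\|^2$, $Q=B_{4n\sqrt V}(x^* )$, and assume $\|F_i(x)-F_i(y)\|\le L\|x-y\|$ for all $x,y\in Q$, $i\in[n]$, and $F$ is monotone on $Q$. Consider DProx-clipped-SEG-shift (arbitrary initial shifts, $\nu$, $\lambda_k$). If $x^k,\tilde x^k\in Q$ for all $k=0,1,\dots,K$, then for all $u\in B_{4n\sqrt V}(x^* )$ $$\langle F(u),\tilde x^K_{\mathrm{avg}}-u\rangle+\Psi(\tilde x^K_{\mathrm{avg}})-\Psi(u)\le\frac{\|x^0-u\|^2-\|x^{K+1}-u\|^2}{2\gamma(K+1)}+\frac{\gamma}{K+1}\sum_{k=0}^K\left(3\|\omega_k\|^2+4\|\theta_k\|^2\right)+\frac1{K+1}\sum_{k=0}^K\langle\theta_k,x^k-u\rangle,$$ where $\tilde x^K_{\mathrm{avg}}=\frac1{K+1}\sum_{k=0}^K\tilde x^k$, $\theta_k=F(\tilde x^k)-\hat g^k$ and $\omega_k=F(x^k)-\tilde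 g^k$.
   Context: $\mathrm{prox}$ and $\mathrm{clip}(y,\lambda)=\min\{1,\lambda/\|y\|\}y$ ($\mathrm{clip}(0,\lambda)=0$) as usual. DProx-clipped-SEG-shift: $\tilde x^k=\mathrm{prox}_{\gamma\Psi}(x^k-\gamma\tilde g^k)$, $\tilde g^k=\frac1n\sum_i\tilde g_i^k$, $\tilde g_i^k=\tilde h_i^k+\tilde\Delta_i^k$, $\tilde h_i^{k+1}=\tilde h_i^k+\nu\tilde\Delta_i^k$, $\tilde\Delta_i^k=\mathrm{clip}(F_{\xi^k_{1,i}}(x^k)-\tilde h_i^k,\lambda_k)$; $x^{k+1}=\mathrm{prox}_{\gamma\Psi}(x^k-\gamma\hat g^k)$, $\hat g^k=\frac1n\sum_i\hat g_i^k$, $\hat g_i^k=\hat h_i^k+\hat\Delta_i^k$, $\hat h_i^{k+1}=\hat h_i^k+\nu\hat\Delta_i^k$, $\hat\Delta_i^k=\mathrm{clip}(F_{\xi^k_{2,i}}(\tilde x^k)-\hat h_i^k,\lambda_k)$, with all samples drawn independently. *)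

(* Defs.v *)
From HB Require Import structures.
From mathcomp Require Import all_boot all_order all_algebra.
From mathcomp Require Import all_classical all_reals all_analysis.
Set Implicit Arguments. Unset Strict Implicit. Unset Printing Implicit Defensive.
Import Order.TTheory GRing.Theory Num.Theory.
Local Open Scope ring_scope.

Section Defs.
Variables (R : realType) (d : nat).
Notation vec := 'rV[R]_d.

Definition sdot (u v : vec) : R := \sum_(j < d) u 0 j * v 0 j.
Definition snorm (u : vec) : R := Num.sqrt (sdot u u).

Definition sball (c : vec) (r : R) (x : vec) : Prop := snorm (x - c) <= r.

Definition clip (y : vec) (lam : R) : vec :=
  if y == 0 then 0 else Num.min 1 (lam / snorm y) *: y.

Definition proper_fun (Psi : vec -> \bar R) : Prop :=
  (forall x, Psi x != -oo%E) /\ exists x, Psi x \is a fin_num.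
Definition convex_fun (Psi : vec -> \bar R) : Prop :=
  forall (x y : vec) (t : R), 0 < t < 1 ->
    (Psi (t *: x + (1 - t) *: y)%R <= t%:E * Psi x + (1 - t)%:E * Psi y)%E.
Definition closed_fun (Psi : vec -> \bar R) : Prop :=
  forall (a : R) (y : nat -> vec) (z : vec),
    (forall m, (Psi (y m) <= a%:E)%E) ->
    (forall e : R, 0 < e -> exists N : nat, forall m, (N <= m)%N -> snorm (y m - z) < e) ->
    (Psi z <= a%:E)%E.

(* p = prox_{gamma Psi}(z): p minimizes gamma Psi(.) + 1/2 ||. - z||^2
   (the minimizer is unique for proper closed convex Psi). *)
Definition is_prox (gamma : R) (Psi : vec -> \bar R) (z p : vec) : Prop :=
  forall y : vec,
    (gamma%:E * Psi p + (2^-1 * snorm (p - z) ^+ 2)%:E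
     <= gamma%:E * Psi y + (2^-1 * snorm (y - z) ^+ 2)%:E)%E.

Definition avgop (n : nat) (Fi : 'I_n -> vec -> vec) (x : vec) : vec :=
  n%:R^-1 *: \sum_(i < n) Fi i x.

Definition shiftDelta (n : nat) (Fs : 'I_n -> vec) (h : 'I_n -> vec) (lam : R)
  (i : 'I_n) : vec := clip (Fs i - h i) lam.
Definition shiftG (n : nat) (Fs : 'I_n -> vec) (h : 'I_n -> vec) (lam : R) : vec :=
  n%:R^-1 *: \sum_(i < n) (h i + shiftDelta Fs h lam i).

End Defs.

(* DProx-clipped-SEG-shift trajectory, for given samples.
   Fxi i xi x = F_{xi}(x) for the i-th worker; xi1 k i, xi2 k i are the samples
   xi^k_{1,i}, xi^k_{2,i}. *)
Definition is_DProx_clipped_SEG_shift (R : realType) (d n : nat) (Xi : Type)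
  (Fxi : 'I_n -> Xi -> 'rV[R]_d -> 'rV[R]_d) (Psi : 'rV[R]_d -> \bar R)
  (gamma nu : R) (lam : nat -> R) (xi1 xi2 : nat -> 'I_n -> Xi)
  (x xt : nat -> 'rV[R]_d) (ht hh : nat -> 'I_n -> 'rV[R]_d) : Prop :=
  forall k : nat,
    [/\ is_prox gamma Psi (x k - gamma *: shiftG (fun i => Fxi i (xi1 k i) (x k)) (ht k) (lam k)) (xt k),
        forall i, ht k.+1 i = ht k i + nu *: shiftDelta (fun i => Fxi i (xi1 k i) (x k)) (ht k) (lam k) i,
        is_prox gamma Psi (x k - gamma *: shiftG (fun i => Fxi i (xi2 k i) (xt k)) (hh k) (lam k)) (x k.+1)
      & forall i, hh k.+1 i = hh k i + nu *: shiftDelta (fun i => Fxi i (xi2 k i) (xt k)) (hh k) (lam k) i].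

(* Main.v *)
Require Import Defs.
From HB Require Import structures.
From mathcomp Require Import all_boot all_order all_algebra.
From mathcomp Require Import all_classical all_reals all_analysis.
From mathcomp Require Import ring lra.
Import Order.TTheory GRing.Theory Num.Theory.
Local Open Scope ring_scope.

Set Implicit Arguments. Unset Strict Implicit. Unset Printing Implicit Defensive.
Section Aux.
Variables (R : realType) (d : nat).
Notation vec := 'rV[R]_d.
Implicit Types (a b c : vec).

Lemma sdotC a b : sdot a b = sdot b a.
Proof. by apply: eq_bigr => j _; rewrite mulrC. Qed.
Lemma sdotDl a b c : sdot (a + b) c = sdot a c + sdot b c.
Proof. by rewrite /sdot -big_split; apply: eq_bigr => j _; rewrite mxE mulrDl. Qed.
Lemma sdotDr a b c : sdot c (a + b) = sdot c a + sdot c b.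
Proof. by rewrite sdotC sdotDl !(sdotC c). Qed.
Lemma sdotZl t a b : sdot (t *: a) b = t * sdot a b.
Proof. by rewrite /sdot mulr_sumr; apply: eq_bigr => j _; rewrite mxE mulrA. Qed.
Lemma sdotZr t a b : sdot a (t *: b) = t * sdot a b.
Proof. by rewrite sdotC sdotZl sdotC. Qed.
Lemma sdotNl a b : sdot (- a) b = - sdot a b.
Proof. by rewrite -scaleN1r sdotZl mulN1r. Qed.
Lemma sdotNr a b : sdot a (- b) = - sdot a b.
Proof. by rewrite sdotC sdotNl sdotC. Qed.
Lemma sdotBl a b c : sdot (a - b) c = sdot a c - sdot b c.
Proof. by rewrite sdotDl sdotNl. Qed.
Lemma sdotBr a b c : sdot c (a - b) = sdot c a - sdot c b.
Proof. by rewrite sdotDr sdotNr. Qed.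
Lemma sdot0r a : sdot a 0 = 0.
Proof. by rewrite /sdot big1 // => j _; rewrite mxE mulr0. Qed.
Lemma sdot_ge0 a : 0 <= sdot a a.
Proof. by apply: sumr_ge0 => j _; rewrite -expr2 sqr_ge0. Qed.
Lemma snorm2 a : snorm a ^+ 2 = sdot a a.
Proof. by rewrite /snorm sqr_sqrtr // sdot_ge0. Qed.
Lemma sdot_sumr (I : finType) (f : I -> vec) a :
  sdot a (\sum_i f i) = \sum_i sdot a (f i).
Proof. exact: (big_morph (sdot a) (fun x y => sdotDr x y a) (sdot0r a)). Qed.
Lemma sdot_suml (I : finType) (f : I -> vec) a :
  sdot (\sum_i f i) a = \sum_i sdot (f i) a.
Proof. by rewrite sdotC sdot_sumr; apply: eq_bigr => i _; rewrite sdotC. Qed.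
Lemma sdot_young a b : 2 * sdot a b <= sdot a a + sdot b b.
Proof.
have := sdot_ge0 (a - b); rewrite !sdotBl !sdotBr (sdotC b a). lra.
Qed.

Lemma sdot_jensen n (v : 'I_n -> vec) :
  sdot (\sum_i v i) (\sum_i v i) <= n%:R * \sum_i sdot (v i) (v i).
Proof.
rewrite sdot_suml.
under eq_bigr => i _ do rewrite sdot_sumr.
apply: (@le_trans _ _ (\sum_(i < n) \sum_(j < n) (2^-1 * (sdot (v i) (v i) + sdot (v j) (v j))))).
  apply: ler_sum => i _; apply: ler_sum => j _; have := sdot_young (v i) (v j).
  move=> h; by rewrite -(@ler_pM2l _ 2) // mulrA divff ?pnatr_eq0 // mul1r.
rewrite (eq_bigr (fun i => 2^-1 * (sdot (v i) (v i) *+ n + \sum_(j < n) sdot (v j) (v j)))); last first.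
  by move=> i _; rewrite -mulr_sumr big_split /= sumr_const card_ord.
rewrite -mulr_sumr big_split /= sumr_const card_ord sumrMnl.
set T := \sum_(i < n) sdot (v i) (v i).
rewrite -mulr2n -[T *+ n]mulr_natl -[n%:R * T *+ 2]mulr_natl mulKf ?pnatr_eq0 //.
Qed.
End Aux.

Section Aux2.
Variables (R : realType) (d : nat).
Notation vec := 'rV[R]_d.
Implicit Types (a b c : vec).

Lemma limit_arg (a b C : R) : 0 <= C -> (forall t, 0 < t < 1 -> a <= b + t * C) -> a <= b.
Proof.
move=> C0 H; rewrite leNgt; apply/negP => ab.
set del := a - b.
have d0 : 0 < del by rewrite subr_gt0.
have p0 : 0 < del + C + 1 by lra.
set t := del / (del + C + 1).
have t0 : 0 < t by rewrite divr_gt0.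
have t1 : t < 1 by rewrite ltr_pdivrMr // mul1r; lra.
have := H t; rewrite t0 t1 => /(_ isT).
have : t * C < del.
  rewrite /t mulrAC ltr_pdivrMr // mulrDr mulrDr; have := mulr_gt0 d0 d0; lra.
move=> h1 h2; move: h1 h2; rewrite /del; lra.
Qed.

Lemma fin_of (e : \bar R) (r : R) : e != -oo%E -> (e <= r%:E)%E -> exists q, e = q%:E.
Proof. by case: e => [q| |] //= _ _; exists q. Qed.

Lemma prox_fin gamma (Psi : vec -> \bar R) z p y (Py : R) :
  proper_fun Psi -> 0 < gamma -> is_prox gamma Psi z p -> Psi y = Py%:E ->
  exists Pp, Psi p = Pp%:E.
Proof.
move=> [Pn _] g0 /(_ y) + ey; rewrite ey.
have := Pn p; case: (Psi p) => [q| |] //= _; first by exists q.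
by rewrite gt0_muley ?lte_fin.
Qed.

Lemma sdot_expand a b t : sdot (a + t *: b) (a + t *: b) = sdot a a + 2 * t * sdot a b + t ^+ 2 * sdot b b.
Proof. rewrite !sdotDl !sdotDr !sdotZl !sdotZr (sdotC b a); ring. Qed.

Lemma prox_vi gamma (Psi : vec -> \bar R) z p y (Pp Py : R) :
  proper_fun Psi -> convex_fun Psi -> 0 < gamma -> is_prox gamma Psi z p ->
  Psi p = Pp%:E -> Psi y = Py%:E ->
  gamma * Pp <= gamma * Py + sdot (p - z) (y - p).
Proof.
move=> [Pn _] cv g0 hp ep ey.
apply: (@limit_arg _ _ (2^-1 * sdot (y - p) (y - p))).
  by rewrite mulr_ge0 ?sdot_ge0 ?invr_ge0.
move=> t /andP[t0 t1].
set yt := t *: y + (1 - t) *: p.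
have hc := cv y p t; rewrite t0 t1 ey ep /= in hc; have {}hc := hc isT.
rewrite -!EFinM -EFinD in hc.
have [q eq] : exists q, Psi yt = q%:E by apply: fin_of (Pn yt) hc.
rewrite eq lee_fin in hc.
have := hp yt; rewrite eq ep -!EFinM -!EFinD lee_fin !snorm2.
have -> : yt - z = (p - z) + t *: (y - p).
  by rewrite /yt scalerBr scalerBl scale1r; abstract (apply/rowP => j; rewrite !mxE; ring).
rewrite sdot_expand.
move=> h.
have h2 : t * (gamma * Pp) <= t * (gamma * Py + sdot (p - z) (y - p) + t * (2^-1 * sdot (y - p) (y - p))).
  nra.
by rewrite ler_pM2l in h2.
Qed.
End Aux2.

Section Aux3.
Variables (R : realType) (d : nat).
Notation vec := 'rV[R]_d.

Lemma coord_ineq (y x z u fy fx gt gh g : R) :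
  g * (fy * (y - u)) + (y - (x - g * gt)) * (z - y) + (z - (x - g * gh)) * (u - z)
  <= 2^-1 * ((x - u) * (x - u) - (z - u) * (z - u))
     + g ^+ 2 * (3 * ((fx - gt) * (fx - gt)) + 4 * ((fy - gh) * (fy - gh)))
     + g * ((fy - gh) * (x - u))
     + (3 / 2 * g ^+ 2 * ((fy - fx) * (fy - fx)) - 8^-1 * ((y - x) * (y - x))).
Proof.
rewrite -subr_ge0.
set w := fx - gt. set th := fy - gh.
set S := (3*g*(fy - fx)-(y - z))^+2/6+(3*g*w-(y-z))^+2/6+(3*g*th+(y-z))^+2/6
  +(4*g*th-3*(y-x))^+2/24+3/2*g^+2*w^+2+11/6*g^+2*th^+2.
have -> : 2^-1 * ((x - u) * (x - u) - (z - u) * (z - u))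
     + g ^+ 2 * (3 * (w * w) + 4 * (th * th))
     + g * (th * (x - u))
     + (3 / 2 * g ^+ 2 * ((fy - fx) * (fy - fx)) - 8^-1 * ((y - x) * (y - x)))
     - (g * (fy * (y - u)) + (y - (x - g * gt)) * (z - y) + (z - (x - g * gh)) * (u - z)) = S.
  by rewrite /S /w /th; field.
rewrite /S.
have h1 := sqr_ge0 (3*g*(fy - fx)-(y - z)).
have h2 := sqr_ge0 (3*g*w-(y - z)).
have h3 := sqr_ge0 (3*g*th+(y - z)).
have h4 := sqr_ge0 (4*g*th-3*(y-x)).
have h5 := mulr_ge0 (sqr_ge0 g) (sqr_ge0 w).
have h6 := mulr_ge0 (sqr_ge0 g) (sqr_ge0 th).
lra.
Qed.

Lemma core_sum (X Y Z U FX FY GT GH : vec) g :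
  g * sdot FY (Y - U) + sdot (Y - (X - g *: GT)) (Z - Y) + sdot (Z - (X - g *: GH)) (U - Z)
  <= 2^-1 * (sdot (X - U) (X - U) - sdot (Z - U) (Z - U))
     + g ^+ 2 * (3 * sdot (FX - GT) (FX - GT) + 4 * sdot (FY - GH) (FY - GH))
     + g * sdot (FY - GH) (X - U)
     + (3 / 2 * g ^+ 2 * sdot (FY - FX) (FY - FX) - 8^-1 * sdot (Y - X) (Y - X)).
Proof.
rewrite /sdot.
do 20! (first [rewrite -sumrB | rewrite mulr_sumr | rewrite -big_split | idtac]).
apply: ler_sum => j _; rewrite !mxE /=.
have := coord_ineq (Y 0 j) (X 0 j) (Z 0 j) (U 0 j) (FY 0 j) (FX 0 j) (GT 0 j) (GH 0 j) g.
by [].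
Qed.
End Aux3.

Section Aux4.
Variables (R : realType) (d : nat).
Notation vec := 'rV[R]_d.

Lemma avg_lip n (Fi : 'I_n -> vec -> vec) (L : R) y z : (0 < n)%N -> 0 <= L ->
  (forall i, snorm (Fi i y - Fi i z) <= L * snorm (y - z)) ->
  sdot (avgop Fi y - avgop Fi z) (avgop Fi y - avgop Fi z) <= L ^+ 2 * sdot (y - z) (y - z).
Proof.
move=> n0 L0 hL.
have -> : avgop Fi y - avgop Fi z = n%:R^-1 *: \sum_i (Fi i y - Fi i z).
  by rewrite /avgop -scalerBr sumrB.
rewrite sdotZl sdotZr.
have hJ := sdot_jensen (fun i => Fi i y - Fi i z).
have he : forall i, sdot (Fi i y - Fi i z) (Fi i y - Fi i z) <= L ^+ 2 * sdot (y - z) (y - z).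
  move=> i; rewrite -!snorm2 -exprMn.
  have h0 : 0 <= snorm (Fi i y - Fi i z) by exact: sqrtr_ge0.
  have h0' : 0 <= L * snorm (y - z) by rewrite mulr_ge0 // sqrtr_ge0.
  by rewrite ler_sqr ?nnegrE //; exact: hL.
have hs : \sum_i sdot (Fi i y - Fi i z) (Fi i y - Fi i z) <= n%:R * (L ^+ 2 * sdot (y - z) (y - z)).
  apply: le_trans (ler_sum _ (fun i _ => he i)) _.
  by rewrite sumr_const card_ord mulr_natl.
have np : (0 : R) < n%:R by rewrite ltr0n.
have hS := le_trans hJ (ler_wpM2l (ler0n _ n) hs).
rewrite mulrA -invfM ler_pdivrMl ?mulr_gt0 //.
by rewrite !mulrA in hS *.
Qed.

Lemma psi_avg (Psi : vec -> \bar R) (f : nat -> vec) (P : nat -> R) m :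
  convex_fun Psi -> (forall k, (k <= m)%N -> Psi (f k) = (P k)%:E) ->
  (Psi (m.+1%:R^-1 *: \sum_(k < m.+1) f k) <= (m.+1%:R^-1 * \sum_(k < m.+1) P k)%:E)%E.
Proof.
move=> cv; elim: m => [|m IH] hP.
  by rewrite !big_ord1 invr1 scale1r mul1r hP.
have {}IH := IH (fun k hk => hP k (leqW hk)).
set t : R := m.+1%:R / m.+2%:R.
have m2 : (0 : R) < m.+2%:R by rewrite ltr0n.
have t0 : 0 < t by rewrite divr_gt0 ?ltr0n.
have t1 : t < 1 by rewrite ltr_pdivrMr // mul1r ltr_nat.
have e1 : t * m.+1%:R^-1 = m.+2%:R^-1 by rewrite /t mulrAC divff ?mul1r // pnatr_eq0.
have e2 : 1 - t = m.+2%:R^-1.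
  by rewrite /t; field; rewrite lt0r_neq0 //; have := ler0n R m; lra.
have -> : m.+2%:R^-1 *: \sum_(k < m.+2) f k
    = t *: (m.+1%:R^-1 *: \sum_(k < m.+1) f k) + (1 - t) *: f m.+1.
  by rewrite big_ord_recr /= scalerA e1 e2 scalerDr.
apply: le_trans (cv _ _ _ _) _; first by rewrite t0 t1.
rewrite hP //.
apply: le_trans (leeD (lee_wpmul2l _ IH) (lexx _)) _; first by rewrite lee_fin ltW.
rewrite -!EFinM -EFinD lee_fin [X in _ <= _ * X]big_ord_recr /= mulrA e1 e2 mulrDr.
by [].
Qed.
End Aux4.

Section Aux5.
Variables (R : realType) (d : nat).
Notation vec := 'rV[R]_d.

Lemma step_ineq g L (Psi : vec -> \bar R) (X Y Z U FX FY FU GT GH : vec) (P1 P2 P3 : R) :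
  proper_fun Psi -> convex_fun Psi -> 0 < g -> g ^+ 2 * L ^+ 2 <= 12^-1 ->
  is_prox g Psi (X - g *: GT) Y -> is_prox g Psi (X - g *: GH) Z ->
  Psi Y = P1%:E -> Psi Z = P2%:E -> Psi U = P3%:E ->
  0 <= sdot (FY - FU) (Y - U) ->
  sdot (FY - FX) (FY - FX) <= L ^+ 2 * sdot (Y - X) (Y - X) ->
  sdot FU (Y - U) + P1 - P3 <=
  (snorm (X - U) ^+ 2 - snorm (Z - U) ^+ 2) / (2 * g)
  + g * (3 * snorm (FX - GT) ^+ 2 + 4 * snorm (FY - GH) ^+ 2)
  + sdot (FY - GH) (X - U).
Proof.
move=> pr cv g0 gL p1 p2 e1 e2 e3 hm hl.
have h1 := prox_vi pr cv g0 p1 e1 e2.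
have h2 := prox_vi pr cv g0 p2 e2 e3.
have hc := core_sum X Y Z U FX FY GT GH g.
rewrite sdotBl in hm.
have hs := sdot_ge0 (Y - X).
have hl2 : 3 / 2 * g ^+ 2 * sdot (FY - FX) (FY - FX) <= 8^-1 * sdot (Y - X) (Y - X).
  apply: (@le_trans _ _ (3 / 2 * (g ^+ 2 * L ^+ 2) * sdot (Y - X) (Y - X))).
    rewrite -subr_ge0.
    have -> : 3 / 2 * (g ^+ 2 * L ^+ 2) * sdot (Y - X) (Y - X) - 3 / 2 * g ^+ 2 * sdot (FY - FX) (FY - FX) = 3 / 2 * (g ^+ 2 * (L ^+ 2 * sdot (Y - X) (Y - X) - sdot (FY - FX) (FY - FX))) by ring.
    by rewrite mulr_ge0 // mulr_ge0 ?sqr_ge0 // subr_ge0.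
  have hh : 0 <= (12^-1 - g ^+ 2 * L ^+ 2) * sdot (Y - X) (Y - X) by rewrite mulr_ge0 // subr_ge0.
  rewrite -subr_ge0.
  have -> : 8^-1 * sdot (Y - X) (Y - X) - 3 / 2 * (g ^+ 2 * L ^+ 2) * sdot (Y - X) (Y - X) = 3 / 2 * ((12^-1 - g ^+ 2 * L ^+ 2) * sdot (Y - X) (Y - X)) by field.
  by rewrite mulr_ge0.
rewrite !snorm2.
rewrite -(ler_pM2l g0).
have eq : g * ((sdot (X - U) (X - U) - sdot (Z - U) (Z - U)) / (2 * g))
  = 2^-1 * (sdot (X - U) (X - U) - sdot (Z - U) (Z - U)).
  by field; rewrite gt_eqF.
rewrite !mulrDr eq.
nra.
Qed.
End Aux5.

Unset Implicit Arguments. Set Strict Implicit. Set Printing Implicit Defensive.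

Lemma tele (R : realType) (a : nat -> R) K :
  \sum_(k < K.+1) (a k - a k.+1) = a 0%N - a K.+1.
Proof.
elim: K => [|K IH]; first by rewrite big_ord1.
by rewrite big_ord_recr /= IH addrA subrK.
Qed.

Lemma assemble (R : realType) (a W T S P : nat -> R) (r g : R) K : 0 < g ->
  (forall k, (k <= K)%N -> S k + P k - r <= (a k - a k.+1) / (2 * g) + g * W k + T k) ->
  K.+1%:R^-1 * \sum_(k < K.+1) S k + K.+1%:R^-1 * \sum_(k < K.+1) P k - r <=
  (a 0%N - a K.+1) / (2 * g * K.+1%:R) + g / K.+1%:R * \sum_(k < K.+1) W k
  + K.+1%:R^-1 * \sum_(k < K.+1) T k.
Proof.
move=> g0 h.
have hs : \sum_(k < K.+1) (S k + P k - r) <= \sum_(k < K.+1) ((a k - a k.+1) / (2 * g) + g * W k + T k).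
  by apply: ler_sum => k _; apply: h; rewrite -ltnS.
rewrite !big_split /= -mulr_suml tele -mulr_sumr sumrN sumr_const card_ord in hs.
have k0 : (0 : R) < K.+1%:R by rewrite ltr0n.
have ik : (0 : R) <= K.+1%:R^-1 by rewrite invr_ge0 ltW.
have := ler_wpM2l ik hs.
set A := \sum_(k < K.+1) S k; set B := \sum_(k < K.+1) P k.
set C := \sum_(k < K.+1) W k; set E := \sum_(k < K.+1) T k.
have -> : K.+1%:R^-1 * (A + B + - (r *+ K.+1)) = K.+1%:R^-1 * A + K.+1%:R^-1 * B - r.
  by rewrite -mulr_natl; field; rewrite gt_eqF.
have -> : K.+1%:R^-1 * ((a 0%N - a K.+1) / (2 * g) + g * C + E) =
  (a 0%N - a K.+1) / (2 * g * K.+1%:R) + g / K.+1%:R * C + K.+1%:R^-1 * E.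
  by field; rewrite !gt_eqF.
by [].
Qed.

Theorem lemmaH1 (R : realType) (d n : nat)
  (dsp : measure_display) (Xi : measurableType dsp)
  (D : 'I_n -> probability Xi R)
  (Fxi : 'I_n -> Xi -> 'rV[R]_d -> 'rV[R]_d)
  (Fi : 'I_n -> 'rV[R]_d -> 'rV[R]_d)
  (Psi : 'rV[R]_d -> \bar R)
  (xstar : 'rV[R]_d) (K : nat) (beta gamma L V nu : R) (lam : nat -> R)
  (xi1 xi2 : nat -> 'I_n -> Xi)
  (x xt : nat -> 'rV[R]_d) (ht hh : nat -> 'I_n -> 'rV[R]_d) :
  (0 < n)%N ->
  proper_fun Psi -> closed_fun Psi -> convex_fun Psi ->
  (* F_i(x) = E_{xi ~ D_i}[F_xi(x)], coordinatewise *)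
  (forall i x j, (D i).-integrable setT (fun s => ((Fxi i s x) 0 j)%:E) /\
     ((Fi i x) 0 j)%:E = (\int[D i]_(s in setT) ((Fxi i s x) 0 j)%:E)%E) ->
  (* xstar solves the variational inequality *)
  Psi xstar \is a fin_num ->
  (forall y, (0 <= (sdot (avgop Fi xstar) (y - xstar))%:E + Psi y - Psi xstar)%E) ->
  0 < beta <= 1 ->
  0 < L ->
  0 < gamma <= (Num.sqrt 12 * L)^-1 ->
  snorm (x 0%N - xstar) ^+ 2
    + 640 ^+ 2 * gamma ^+ 2 * ln (48 * n%:R * K.+1%:R / beta) ^+ 2 / n%:R ^+ 2
      * \sum_(i < n) snorm (Fi i xstar) ^+ 2 <= V ->
  (* Lipschitzness of each F_i and monotonicity of F on Q = closed ball of radius 4 n sqrt V around xstar *)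
  (forall i y z, sball xstar (4 * n%:R * Num.sqrt V) y ->
     sball xstar (4 * n%:R * Num.sqrt V) z ->
     snorm (Fi i y - Fi i z) <= L * snorm (y - z)) ->
  (forall y z, sball xstar (4 * n%:R * Num.sqrt V) y ->
     sball xstar (4 * n%:R * Num.sqrt V) z ->
     0 <= sdot (avgop Fi y - avgop Fi z) (y - z)) ->
  (forall k, 0 < lam k) ->
  is_DProx_clipped_SEG_shift Fxi Psi gamma nu lam xi1 xi2 x xt ht hh ->
  (forall k, (k <= K)%N ->
     sball xstar (4 * n%:R * Num.sqrt V) (x k) /\
     sball xstar (4 * n%:R * Num.sqrt V) (xt k)) ->
  forall u, sball xstar (4 * n%:R * Num.sqrt V) u ->
  let xavg := K.+1%:R^-1 *: \sum_(k < K.+1) xt k in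
  let theta := fun k : nat =>
    avgop Fi (xt k) - shiftG (fun i => Fxi i (xi2 k i) (xt k)) (hh k) (lam k) in
  let omega := fun k : nat =>
    avgop Fi (x k) - shiftG (fun i => Fxi i (xi1 k i) (x k)) (ht k) (lam k) in
  ((sdot (avgop Fi u) (xavg - u))%:E + Psi xavg - Psi u
   <= ((snorm (x 0%N - u) ^+ 2 - snorm (x K.+1 - u) ^+ 2) / (2 * gamma * K.+1%:R)
       + gamma / K.+1%:R * \sum_(k < K.+1) (3 * snorm (omega k) ^+ 2 + 4 * snorm (theta k) ^+ 2)
       + K.+1%:R^-1 * \sum_(k < K.+1) sdot (theta k) (x k - u))%:E)%E.
Proof.
move=> n0 pr cl cv hint fin vi hb hL hg hV hlip hmon hlam hseq hball u hu; cbv zeta.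
have [g0 gle] := andP hg.
have gL : gamma ^+ 2 * L ^+ 2 <= 12^-1.
  have s12 : 0 < Num.sqrt (12 : R) by rewrite sqrtr_gt0.
  have h : gamma * (Num.sqrt 12 * L) <= 1.
    by rewrite -ler_pdivlMr ?mulr_gt0 // div1r.
  have h2 : (gamma * (Num.sqrt 12 * L)) ^+ 2 <= 1.
    by rewrite expr_le1 // mulr_ge0 ?ltW // mulr_gt0.
  rewrite !exprMn sqr_sqrtr // in h2.
  have -> : gamma ^+ 2 * L ^+ 2 = 12^-1 * (gamma ^+ 2 * (12 * L ^+ 2)) by field.
  by rewrite -[X in _ <= X]mulr1 ler_wpM2l.
have [Pn _] := pr.
case eu : (Psi u) => [r| |]; last by move: (Pn u); rewrite eu.
  2: by rewrite /= addeNy leNye.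
have ePx : forall k, (k <= K)%N -> Psi (x k.+1) = (fine (Psi (x k.+1)))%:E.
  move=> k hk; case: (hseq k) => p1 _ p2 _.
  by have [P eP] := prox_fin pr g0 p2 eu; rewrite eP.
have ePt : forall k, (k <= K)%N -> Psi (xt k) = (fine (Psi (xt k)))%:E.
  move=> k hk; case: (hseq k) => p1 _ p2 _.
  by have [P eP] := prox_fin pr g0 p1 (ePx k hk); rewrite eP.
have jen := psi_avg cv ePt.
apply: le_trans (leeB (leeD (lexx _) jen) (lexx (r%:E))) _.
rewrite -!EFinD lee_fin.
have -> : K.+1%:R^-1 *: \sum_(k < K.+1) xt k - u = K.+1%:R^-1 *: \sum_(k < K.+1) (xt k - u).
  rewrite sumrB sumr_const card_ord scalerBr -[u *+ _]scaler_nat scalerA mulVf ?scale1r //.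
rewrite sdotZr sdot_sumr.
pose om k := avgop Fi (x k) - shiftG (fun i => Fxi i (xi1 k i) (x k)) (ht k) (lam k).
pose th k := avgop Fi (xt k) - shiftG (fun i => Fxi i (xi2 k i) (xt k)) (hh k) (lam k).
have := @assemble R (fun k => snorm (x k - u) ^+ 2)
  (fun k => 3 * snorm (om k) ^+ 2 + 4 * snorm (th k) ^+ 2)
  (fun k => sdot (th k) (x k - u)) (fun k => sdot (avgop Fi u) (xt k - u))
  (fun k => fine (Psi (xt k))) r gamma K g0.
move=> H; apply: H => k hk.
case: (hseq k) => p1 _ p2 _; have [bx bxt] := hball k hk.
apply: (step_ineq pr cv g0 gL p1 p2 (ePt k hk) (ePx k hk) eu).
  exact: hmon.
apply: avg_lip => // [|i]; first exact: ltW.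
exact: hlip.
Qed.
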